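(* Under the Standing Setup and Assumption (G) described in the context, let $V_{n-k}\subseteq\mathbf{F}_2^n$ be the subspace spanned by the last $n-k$ standard basis vectors. Then $$\mathcal{E}(PC_{f,\mathcal{T}})=\frac{1}{2^{k2^{s-1}}}\sum_{\alpha\in\mathbf{F}_2^{k2^{s-1}}}\ \prod_{c=0}^{2^s-1}\mathcal{E}\big(f_{\chi(c,\alpha)+V_{n-k}}\big).$$
   Context: Standing Setup. $f:\mathbf{F}_2^n\to\mathbf{F}_2$ is a Boolean function. $\mathbf{x}_1,\ldots,\mathbf{x}_n$ are binary sequences, $\mathbf{x}_j=(x_j(t))_{t\ge0}$, with $\mathbf{x}_j$ periodic of period $T_j$, i.e. $x_j(t)=x_j(t \bmod T_j)$. Let $s\ge1$ and integers $0=\ell_1<\ell_2<\cdots<\ell_{s+1}=k\le n$; variable $j$ belongs to block $i$ if $\ell_i<j\le\ell_{i+1}$. For $1\le i\le s$, $M_i=q_i\,\mathrm{lcm}(T_{\ell_i+1},\ldots,T_{\ell_{i+1}})$ with $q_i$ a positive integer. For $c=\sum_{i=1}^s c_i2^{i-1}\in\{0,\ldots,2^s-1\}$ with $c_i\in\{0,1\}$, put $\tau_c=\sum_{i=1}^s c_iM_i$, and $\mathcal{T}=\{\tau_c\}$. The parity-check sequence is $PC_{f,\mathcal{T}}(t)=\bigoplus_{c=0}^{2^s-1} f\big(x_1(t+\tau_c),\ldots,x_n(t+\tau_c)\big)$. The bias of a Boolean function $h$ of $m$ variables is $\mathcal{E}(h)=2^{-m}\sum_{x\in\mathbf{F}_2^m}(-1)^{h(x)}$.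 The bias $\mathcal{E}(PC_{f,\mathcal{T}})$ is the bias of $PC_{f,\mathcal{T}}(t)$ (for a fixed $t\ge0$) viewed as a Boolean function of the $T_1+\cdots+T_n$ bits $x_j(0),\ldots,x_j(T_j-1)$, $1\le j\le n$; equivalently $\mathbb{E}[(-1)^{PC_{f,\mathcal{T}}(t)}]$ when these bits are independent and uniform. Assumption (G): (i) for every $j$ with $k<j\le n$, the $2^s$ integers $\tau_c$ are pairwise incongruent modulo $T_j$; (ii) for every $i\in\{1,\ldots,s\}$ and every $j$ in block $i$, the $2^{s-1}$ integers $\sum_{l\ne i}c_lM_l$ ($c_l\in\{0,1\}$) are pairwise incongruent modulo $T_j$. The map $\chi$: write $\alpha\in\mathbf{F}_2^{k2^{s-1}}$ as $\alpha=(\alpha_1,\ldots,\alpha_k)$ with $\alpha_j=(\alpha_{j,0},\ldots,\alpha_{j,2^{s-1}-1})\in\mathbf{F}_2^{2^{s-1}}$. For $0\le c<2^s$ define $\chi(c,\alpha)=(\chi_1(c,\alpha),\ldots,\chi_k(c,\alpha),0,\ldots,0)\in\mathbf{F}_2^n$ (last $n-k$ coordinates zero), where for $j$ in block $i$, $\chi_j(c,\alpha)=\alpha_{j,m}$ with $m$ the integer obtained from the binary expansion of $c$ by deleting the bit $c_i$ (the bit of weight $2^{i-1}$); explicitly, if $c=2^iq+c_i2^{i-1}+r$ with $0\le r<2^{i-1}$, then $m=2^{i-1}q+r$. (Thus $\chi_j(c,\alpha)=\chi_j(c-2^{i-1},\alpha)$ whenever $c_i=1$.) For $a\in V_k$ (the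 span of the first $k$ standard basis vectors), the restriction $f_{a+V_{n-k}}$ is the Boolean function $y\in V_{n-k}\mapsto f(a+y)$ of $n-k$ variables, so $\mathcal{E}(f_{a+V_{n-k}})=2^{-(n-k)}\sum_{y\in V_{n-k}}(-1)^{f(a+y)}$. *)

(* Defs.v *)
From HB Require Import structures.
From mathcomp Require Import all_boot all_order all_algebra.
Set Implicit Arguments. Unset Strict Implicit. Unset Printing Implicit Defensive.
Import Order.TTheory GRing.Theory Num.Theory.

(* Vectors of F_2^n, with F_2 = bool (addition = xor = addb). *)
Definition bvec (n : nat) := {ffun 'I_n -> bool}.

Definition bias (K : finType) (h : {ffun K -> bool} -> bool) : rat :=
  ((2 ^ #|K|)%:R)^-1 * \sum_(x : {ffun K -> bool}) (-1) ^+ h x.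

(* Index set of the T_0 + ... + T_{n-1} bits x_j(0..T_j-1) (variables 0-based). *)
Definition bitidx (n : nat) (T : nat -> nat) := {j : 'I_n & 'I_(T j)}.
Definition Bits (n : nat) (T : nat -> nat) := {ffun bitidx n T -> bool}.

(* x_j(t) = x_j(t mod T_j) for the periodic sequence determined by the bits X. *)
Definition xval (n : nat) (T : nat -> nat) (X : Bits n T) (j : 'I_n) (t : nat)
  : bool :=
  match (insub (t %% T j) : option 'I_(T j)) with
  | Some i => X (Tagged (fun j : 'I_n => 'I_(T j)) i)
  | None => false
  end.

Definition cbit (c i : nat) : bool := odd (c %/ 2 ^ i).

(* Blocks are 0-based: block i (0 <= i < s) consists of the 0-based variables
   j with l i <= j < l i.+1.  M_i = q_i * lcm of the periods in block i. *)
Definition Mblk (T q l : nat -> nat) (i : nat) : nat :=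
  q i * \big[lcmn/1]_(l i <= j < l i.+1) T j.

Definition tau (s : nat) (M : nat -> nat) (c : nat) : nat :=
  \sum_(i < s) cbit c i * M i.

Definition PC (n s : nat) (T : nat -> nat) (M : nat -> nat)
  (f : bvec n -> bool) (t : nat) (X : Bits n T) : bool :=
  \big[addb/false]_(c < 2 ^ s) f [ffun j : 'I_n => xval X j (t + tau s M c)].

(* delete bit i (weight 2^i) from c: c = 2^{i+1} q + c_i 2^i + r  |->  2^i q + r *)
Definition delbit (i c : nat) : nat := 2 ^ i * (c %/ 2 ^ i.+1) + c %% 2 ^ i.

Definition alpha_at (k s : nat) (alpha : {ffun 'I_k * 'I_(2 ^ (s - 1)) -> bool})
  (j m : nat) : bool :=
  match (insub j : option 'I_k), (insub m : option 'I_(2 ^ (s - 1))) with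
  | Some j', Some m' => alpha (j', m')
  | _, _ => false
  end.

Definition chi (n k s : nat) (l : nat -> nat)
  (alpha : {ffun 'I_k * 'I_(2 ^ (s - 1)) -> bool}) (c : nat) : bvec n :=
  [ffun j : 'I_n => [exists i : 'I_s,
      (l i <= j < l i.+1) && alpha_at alpha j (delbit i c)]].

Definition Vlast (n k : nat) (y : bvec n) : bool := [forall j : 'I_n, (j < k) ==> ~~ y j].

Definition restr_bias (n k : nat) (f : bvec n -> bool) (a : bvec n) : rat :=
  ((2 ^ (n - k))%:R)^-1 *
  \sum_(y : bvec n | Vlast k y) (-1) ^+ f [ffun j => addb (a j) (y j)].

(* Main.v *)
Require Import Defs.
From HB Require Import structures.
From mathcomp Require Import all_boot all_order all_algebra.
Import Order.TTheory GRing.Theory Num.Theory.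

Lemma sum_comp_inj (K L : finType) (pi : L -> K) (Hpi : injective pi)
  (G : {ffun L -> bool} -> rat) :
  (\sum_(X : {ffun K -> bool}) G [ffun x => X (pi x)] =
   (2 ^ (#|K| - #|L|))%:R * \sum_(Z : {ffun L -> bool}) G Z)%R.
Proof.
rewrite (partition_big (fun X : {ffun K -> bool} => [ffun x => X (pi x)]) predT) //=.
rewrite big_distrr /=; apply: eq_bigr => Z _.
rewrite (eq_bigr (fun _ => G Z)); last by move=> X; rewrite ?andTb => /eqP ->.
rewrite sumr_const mulr_natl; congr (_ *+ _)%R.
pose F := fun x : K => if [pick y | pi y == x] is Some y then pred1 (Z y) else predT.
have -> : #|[pred X : {ffun K -> bool} | predT X && ([ffun x => X (pi x)] == Z)]|
   = #|family F|.
  apply: eq_card => X; rewrite [in LHS]inE /=.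
  apply/eqP/familyP => [HZ x | HX].
    rewrite /F; case: pickP => [y /eqP <- | _] //=.
    by rewrite inE -HZ ffunE.
  apply/ffunP => y; rewrite ffunE; have := HX (pi y); rewrite /F.
  case: pickP => [y' /eqP /Hpi -> /eqP //| /(_ y)]; by rewrite eqxx.
rewrite card_family foldrE big_map big_enum /=.
rewrite (bigID (fun x => x \in codom pi)) /=.
rewrite big1 ?mul1n; last first.
  move=> x /codomP[y ->]; rewrite /F; case: pickP => [y' _|/(_ y)]; last by rewrite eqxx.
  exact: card1.
rewrite (eq_bigr (fun _ => 2)); last first.
  move=> x Hx; rewrite /F; case: pickP => [y /eqP Hy|_]; last by rewrite card_bool.
  by case/negP: Hx; rewrite -Hy codom_f.
rewrite prod_nat_const; congr (2 ^ _).
rewrite -(cardC (mem (codom pi))) card_codom // addKn.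
by apply: eq_card => x; rewrite !inE.
Qed.
Definition ins (i m : nat) : nat := 2 ^ i.+1 * (m %/ 2 ^ i) + m %% 2 ^ i.

Lemma cbit_gen (A b i i' : nat) (e : bool) : b < 2 ^ i ->
  cbit (2 ^ i.+1 * A + e * 2 ^ i + b) i' =
  if i' < i then cbit b i' else if i' == i then e else cbit A (i' - i.+1).
Proof.
move=> hb; rewrite /cbit.
case: (ltngtP i' i) => hii.
- have -> : 2 ^ i.+1 * A + e * 2 ^ i + b =
      (2 ^ (i.+1 - i') * A + e * 2 ^ (i - i')) * 2 ^ i' + b.
    have E1 : 2 ^ i.+1 = 2 ^ (i.+1 - i') * 2 ^ i' by rewrite -expnD subnK // ltnW // ltnW.
    have E2 : 2 ^ i = 2 ^ (i - i') * 2 ^ i' by rewrite -expnD subnK // ltnW.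
    rewrite {1}E1 {1}E2 mulnDl; congr (_ + _ + _); first by rewrite mulnAC.
    by rewrite mulnA.
  rewrite divnMDl ?expn_gt0 // oddD oddD !oddM !oddX /=.
  have h1 : (i.+1 - i' == 0) = false by rewrite subn_eq0 leqNgt ltnS (ltnW hii).
  have h2 : (i - i' == 0) = false by rewrite subn_eq0 leqNgt hii.
  by rewrite h1 h2 /= andbF.
-
  have -> : 2 ^ i' = 2 ^ i.+1 * 2 ^ (i' - i.+1) by rewrite -expnD subnKC.
  have hlt : e * 2 ^ i + b < 2 ^ i.+1.
    rewrite expnS mul2n -addnn; case: e => /=; first by rewrite mul1n ltn_add2l.
    by rewrite mul0n add0n (leq_trans hb) // leq_addl.
  by rewrite divnMA -addnA mulnC divnMDl ?expn_gt0 // (divn_small hlt) addn0.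
- rewrite hii.
  have -> : 2 ^ i.+1 * A + e * 2 ^ i + b = (A.*2 + e) * 2 ^ i + b.
    by rewrite mulnDl -mul2n expnS mulnAC.
  by rewrite divnMDl ?expn_gt0 // divn_small // addn0 oddD odd_double; case: e.
Qed.

Lemma c_decomp (c i : nat) : c = 2 ^ i.+1 * (c %/ 2 ^ i.+1) + cbit c i * 2 ^ i + c %% 2 ^ i.
Proof.
rewrite {1}(divn_eq c (2 ^ i)) /cbit; congr (_ + _).
rewrite {1}(divn_eq (c %/ 2 ^ i) 2) -divnMA -expnSr modn2 mulnDl; congr (_ + _).
by rewrite -mulnA -expnS mulnC.
Qed.

Lemma pack_div (a b i : nat) : b < 2 ^ i -> (2 ^ i * a + b) %/ 2 ^ i = a.
Proof. by move=> hb; rewrite mulnC divnMDl ?expn_gt0 // divn_small ?addn0. Qed.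
Lemma pack_mod (a b i : nat) : b < 2 ^ i -> (2 ^ i * a + b) %% 2 ^ i = b.
Proof. by move=> hb; rewrite mulnC modnMDl modn_small. Qed.

Lemma delbit_ins i m : delbit i (ins i m) = m.
Proof.
have hb : m %% 2 ^ i < 2 ^ i by rewrite ltn_pmod ?expn_gt0.
have hb' : m %% 2 ^ i < 2 ^ i.+1 by rewrite (leq_trans hb) // leq_exp2l.
rewrite /delbit /ins pack_div //.
have -> : 2 ^ i.+1 * (m %/ 2 ^ i) + m %% 2 ^ i = 2 ^ i * (2 * (m %/ 2 ^ i)) + m %% 2 ^ i.
  by rewrite mulnA (mulnC _ 2) -expnS.
by rewrite pack_mod // mulnC -divn_eq.
Qed.

Lemma ins_delbit i c : ins i (delbit i c) = 2 ^ i.+1 * (c %/ 2 ^ i.+1) + c %% 2 ^ i.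
Proof.
have hb : c %% 2 ^ i < 2 ^ i by rewrite ltn_pmod ?expn_gt0.
by rewrite /ins /delbit pack_div // pack_mod.
Qed.

Lemma delbit_lt s i c : i < s -> c < 2 ^ s -> delbit i c < 2 ^ (s - 1).
Proof.
case: s => // s hi hc; rewrite subn1 /=.
have hb : c %% 2 ^ i < 2 ^ i by rewrite ltn_pmod ?expn_gt0.
have hq : c %/ 2 ^ i.+1 < 2 ^ (s - i).
  by rewrite ltn_divLR ?expn_gt0 // -expnD addnS subnK.
rewrite /delbit (@leq_trans (2 ^ i * (c %/ 2 ^ i.+1).+1)) //.
  by rewrite mulnS addnC ltn_add2r.
have hi' : i <= s := hi.
by rewrite -(subnK hi') addnC expnD leq_mul2l hq orbT.
Qed.

Lemma ins_lt s i m : i < s -> m < 2 ^ (s - 1) -> ins i m < 2 ^ s.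
Proof.
case: s => // s hi hm; rewrite subn1 /= in hm.
have hb : m %% 2 ^ i < 2 ^ i.+1 by rewrite (leq_trans (ltn_pmod _ _)) ?expn_gt0 // leq_exp2l.
have hq : m %/ 2 ^ i < 2 ^ (s - i).
  by rewrite ltn_divLR ?expn_gt0 // -expnD subnK.
rewrite /ins (@leq_trans (2 ^ i.+1 * (m %/ 2 ^ i).+1)) //.
  by rewrite mulnS addnC ltn_add2r.
have hi' : i <= s := hi.
by rewrite -(subnK hi') -addnS addnC expnD leq_mul2l hq orbT.
Qed.

Lemma tau_split s M i A (e : bool) b : i < s -> b < 2 ^ i ->
  tau s M (2 ^ i.+1 * A + e * 2 ^ i + b) = tau s M (2 ^ i.+1 * A + b) + e * M i.
Proof.
move=> hi hb; rewrite /tau (bigD1 (Ordinal hi)) //= [in RHS](bigD1 (Ordinal hi)) //=.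
have E : 2 ^ i.+1 * A + b = 2 ^ i.+1 * A + false * 2 ^ i + b by rewrite mul0n addn0.
rewrite E !cbit_gen //.
rewrite ltnn eqxx mul0n add0n addnC; congr (_ + _).
apply: eq_bigr => j hj; rewrite cbit_gen // [in RHS]cbit_gen //.
by have /negbTE -> : (j : nat) != i by apply: contra hj => /eqP h; apply/eqP/val_inj.
Qed.
Section Main.
Variables (n k s : nat) (f : bvec n -> bool) (T q l : nat -> nat).
Hypotheses (HT : forall j, j < n -> 0 < T j)
  (Hs : 0 < s)
  (Hl0 : l 0 = 0)
  (Hlinc : forall i, i < s -> l i < l i.+1)
  (Hls : l s = k)
  (Hkn : k <= n)
  (Hq : forall i, i < s -> 0 < q i)
  (G1 : forall j, k <= j < n -> forall c1 c2, c1 < 2 ^ s -> c2 < 2 ^ s ->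
          tau s (Mblk T q l) c1 = tau s (Mblk T q l) c2 %[mod T j] -> c1 = c2)
  (G2 : forall i, i < s -> forall j, l i <= j < l i.+1 ->
          forall c1 c2, c1 < 2 ^ s -> c2 < 2 ^ s -> ~~ cbit c1 i -> ~~ cbit c2 i ->
          tau s (Mblk T q l) c1 = tau s (Mblk T q l) c2 %[mod T j] -> c1 = c2).
Variable t : nat.

Lemma l_mono a b : a <= b -> b <= s -> l a <= l b.
Proof.
elim: b => [|b IH]; first by rewrite leqn0 => /eqP ->.
rewrite leq_eqVlt => /orP[/eqP -> //| hab] hb.
by rewrite (leq_trans (IH hab (ltnW hb))) // ltnW // Hlinc.
Qed.

Lemma blk_uniq i1 i2 j : i1 < s -> i2 < s -> l i1 <= j < l i1.+1 -> l i2 <= j < l i2.+1 -> i1 = i2.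
Proof.
move=> h1 h2 /andP[a1 b1] /andP[a2 b2].
case: (ltngtP i1 i2) => // hlt.
- have := l_mono _ _ hlt (ltnW h2); move=> H; by have := leq_ltn_trans (leq_trans H a2) b1; rewrite ltnn.
- have := l_mono _ _ hlt (ltnW h1); move=> H; by have := leq_ltn_trans (leq_trans H a1) b2; rewrite ltnn.
Qed.

Lemma blk_ex j : j < k -> exists2 i, i < s & l i <= j < l i.+1.
Proof.
rewrite -Hls; suff : forall b, b <= s -> j < l b -> exists2 i, i < b & l i <= j < l i.+1.
  by move=> H /(H s (leqnn s)) [i hi hj]; exists i.
elim=> [|b IH] hb; first by rewrite Hl0.
move=> hj; case: (ltnP j (l b)) => hjb.
  by have [i hi hi'] := IH (ltnW hb) hjb; exists i => //; rewrite ltnW.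
by exists b => //; rewrite hjb hj.
Qed.

Lemma noblk j i : k <= j -> i < s -> ~~ (l i <= j < l i.+1).
Proof.
move=> hj hi; rewrite negb_and -leqNgt orbC (leq_trans _ hj) //.
by rewrite -Hls l_mono.
Qed.

Definition blk (j : nat) : nat :=
  if [pick i : 'I_s | l i <= j < l i.+1] is Some i then val i else 0.

Lemma blkE j i : i < s -> l i <= j < l i.+1 -> blk j = i.
Proof.
move=> hi hj; rewrite /blk; case: pickP => [i' hi'|/(_ (Ordinal hi))]; last by rewrite hj.
exact: (blk_uniq _ _ _ (ltn_ord i') hi hi' hj).
Qed.

Definition pos (j : 'I_n) (u : nat) : 'I_(T j) := Ordinal (ltn_pmod u (HT j (ltn_ord j))).

Lemma xvalE (X : Bits n T) j u : xval X j u = X (Tagged (fun j : 'I_n => 'I_(T j)) (pos j u)).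
Proof.
rewrite /xval; case: insubP => [i _ hi|]; last by rewrite ltn_pmod // HT.
by congr (X (Tagged _ _)); apply: val_inj.
Qed.


Definition Ltype := (('I_k * 'I_(2 ^ (s - 1))) + ('I_(2 ^ s) * 'I_(n - k)))%type.
Lemma rk_lt (r : 'I_(n - k)) : k + r < n. Proof. by rewrite -ltn_subRL. Qed.
Definition rk (r : 'I_(n - k)) : 'I_n := Ordinal (rk_lt r).
Definition wk (j : 'I_k) : 'I_n := widen_ord Hkn j.

Definition pi (x : Ltype) : bitidx n T :=
  match x with
  | inl (j, m) => Tagged (fun j : 'I_n => 'I_(T j))
                    (pos (wk j) (t + tau s (Mblk T q l) (ins (blk j) m)))
  | inr (c, r) => Tagged (fun j : 'I_n => 'I_(T j)) (pos (rk r) (t + tau s (Mblk T q l) c))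
  end.

Lemma cbit_ins i m : cbit (ins i m) i = false.
Proof.
have hb : m %% 2 ^ i < 2 ^ i by rewrite ltn_pmod ?expn_gt0.
have E : ins i m = 2 ^ i.+1 * (m %/ 2 ^ i) + false * 2 ^ i + m %% 2 ^ i.
  by rewrite /ins mul0n addn0.
by rewrite E cbit_gen // ltnn eqxx.
Qed.

Lemma pi_inj : injective pi.
Proof.
move=> [[j1 m1]|[c1 r1]] [[j2 m2]|[c2 r2]]
  /(congr1 (fun x : bitidx n T => (val (tag x), val (tagged x)))) /= [].
- move=> hj; have ej : j1 = j2 by apply: val_inj.
  subst j2 => hp.
  have [i hi hij] := blk_ex _ (ltn_ord j1).
  rewrite (blkE _ _ hi hij) in hp.
  have e : ins i m1 = ins i m2.
    apply: (G2 _ hi _ hij); rewrite ?ins_lt ?cbit_ins //.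
    by apply/eqP; rewrite -(eqn_modDl t); apply/eqP.
  by congr (inl (_, _)); apply: ord_inj; rewrite -(delbit_ins i m1) e delbit_ins.
- by move=> hj _; have := ltn_ord j1; rewrite hj ltnNge leq_addr.
- by move=> hj _; have := ltn_ord j2; rewrite -hj ltnNge leq_addr.
- move=> /addnI hr; have er : r1 = r2 by apply: val_inj.
  subst r2 => hp.
  have e : (c1 : nat) = c2.
    apply: (G1 (k + r1)); rewrite ?ltn_ord ?leq_addr ?rk_lt //.
    by apply/eqP; rewrite -(eqn_modDl t); apply/eqP.
  by congr (inr (_, _)); apply: ord_inj.
Qed.

Lemma dvd_blk i j : l i <= j < l i.+1 -> T j %| Mblk T q l i.
Proof.
case/andP=> h1 h2; rewrite /Mblk dvdn_mull //.
rewrite (big_cat_nat h1 (ltnW h2)) /= [X in lcmn _ X]big_ltn //.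
exact: (dvdn_trans (dvdn_lcml (T j) _) (dvdn_lcmr _ _)).
Qed.

Definition ext (w : {ffun 'I_(n - k) -> bool}) : bvec n :=
  [ffun j : 'I_n => match (insub (j - k) : option 'I_(n - k)) with
                   | Some r => (k <= j) && w r | None => false end].
Definition restr (y : bvec n) : {ffun 'I_(n - k) -> bool} := [ffun r => y (rk r)].

Lemma restr_biasE (a : bvec n) : restr_bias k f a =
  (((2 ^ (n - k))%:R)^-1 *
   \sum_(w : {ffun 'I_(n - k) -> bool}) (-1) ^+ f [ffun j => addb (a j) (ext w j)])%R.
Proof.
rewrite /restr_bias; congr (_ * _)%R.
rewrite (reindex_onto ext restr) /=; last first.
  move=> y /forallP Hy; apply/ffunP => j; rewrite /ext /restr ffunE.
  case: insubP => [r _ hr | hn].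
    case: (leqP k j) => hkj /=.
      by rewrite ffunE; congr (y _); apply: val_inj; rewrite /= hr subnKC.
    by move: (Hy j) => /implyP /(_ hkj) /negbTE.
  case: (leqP k j) => hkj.
    by case/negP: hn; rewrite ltn_sub2r // (leq_ltn_trans hkj).
  by move: (Hy j) => /implyP /(_ hkj) /negbTE.
apply: eq_bigl => w.
have -> : Vlast k (ext w).
  apply/forallP => j; apply/implyP => hj; rewrite /ext ffunE.
  by case: insubP => // r _ _; rewrite leqNgt hj.
have -> // : restr (ext w) == w.
apply/eqP/ffunP => r; rewrite /restr /ext !ffunE.
case: insubP => [r' _ hr' | hn] /=.
  by rewrite leq_addr; congr (w _); apply: val_inj; rewrite /= hr' addKn.
by case/negP: hn; rewrite addKn.
Qed.

Definition Zl (Z : {ffun Ltype -> bool}) : {ffun 'I_k * 'I_(2 ^ (s - 1)) -> bool} :=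
  [ffun p => Z (inl p)].
Definition Zr (Z : {ffun Ltype -> bool}) : {ffun 'I_(2 ^ s) -> {ffun 'I_(n - k) -> bool}} :=
  [ffun c => [ffun r => Z (inr (c, r))]].

Lemma v_eq (X : Bits n T) (c : 'I_(2 ^ s)) :
  [ffun j => xval X j (t + tau s (Mblk T q l) c)] =
  [ffun j => addb (@chi n k s l (Zl [ffun x => X (pi x)]) c j)
                  (ext (Zr [ffun x => X (pi x)] c) j)].
Proof.
apply/ffunP => j; rewrite !ffunE xvalE.
set Z := [ffun x => X (pi x)].
case: (ltnP j k) => hjk.
  rewrite (_ : match _ with Some _ => _ | None => false end = false);
    last by case: (insub _).
  rewrite addbF.
  have [i hi hij] := blk_ex _ hjk.
  have -> : [exists i0 : 'I_s, (l i0 <= j < l i0.+1) && alpha_at (Zl Z) j (delbit i0 c)]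
           = alpha_at (Zl Z) j (delbit i c).
    apply/existsP/idP => [[i0 /andP[h0 ha]] | ha]; last by exists (Ordinal hi); rewrite hij.
    by rewrite -(blk_uniq _ _ _ (ltn_ord i0) hi h0 hij).
  rewrite /alpha_at.
  case: insubP => [j' _ hj'|]; last by rewrite hjk.
  case: insubP => [m' _ hm'|]; last by rewrite delbit_lt.
  rewrite /Zl /Z !ffunE /=.
  have ej : wk j' = j by apply: val_inj.
  rewrite -ej; congr (X (Tagged _ _)); apply: val_inj => /=.
  rewrite hj' (blkE _ _ hi hij) hm' ins_delbit {1}(c_decomp c i).
  rewrite tau_split ?ltn_pmod ?expn_gt0 //.
  have := dvd_blk _ _ hij => /dvdnP [z ->].
  by rewrite addnA addnC mulnA modnMDl.
- have -> : [exists i0 : 'I_s, (l i0 <= j < l i0.+1) &&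
             alpha_at (Zl Z) j (delbit i0 c)] = false.
    apply/existsP => [[i0 /andP[h0 _]]]; move: h0.
    by rewrite (negbTE (noblk _ _ hjk (ltn_ord i0))).
  rewrite addFb.
  case: insubP => [r _ hr | hn] /=.
    rewrite /Z !ffunE /=.
    have er : rk r = j by apply: val_inj; rewrite /= hr subnKC.
    by rewrite -er.
  by case/negP: hn; rewrite ltn_sub2r // (leq_ltn_trans hjk).
Qed.

Definition join (a : {ffun 'I_k * 'I_(2 ^ (s - 1)) -> bool})
  (W : {ffun 'I_(2 ^ s) -> {ffun 'I_(n - k) -> bool}}) : {ffun Ltype -> bool} :=
  [ffun x => match x with inl p => a p | inr (c, r) => W c r end].

Lemma card_L : #|{: Ltype}| = k * 2 ^ (s - 1) + 2 ^ s * (n - k).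
Proof. by rewrite card_sum !card_prod !card_ord. Qed.

Lemma main_sec : bias (@PC n s T (Mblk T q l) f t) =
  (((2 ^ (k * 2 ^ (s - 1)))%:R)^-1 *
  \sum_(alpha : {ffun 'I_k * 'I_(2 ^ (s - 1)) -> bool})
     \prod_(c < 2 ^ s) restr_bias k f (@chi n k s l alpha c))%R.
Proof.
pose g (a : {ffun 'I_k * 'I_(2 ^ (s - 1)) -> bool}) (c : 'I_(2 ^ s))
  (w : {ffun 'I_(n - k) -> bool}) : rat :=
  ((-1) ^+ f [ffun j => addb (@chi n k s l a c j) (ext w j)])%R.
have RHS : (\sum_(a : {ffun 'I_k * 'I_(2 ^ (s - 1)) -> bool})
     \prod_(c < 2 ^ s) restr_bias k f (@chi n k s l a c) =
   (((2 ^ (n - k))%:R)^-1) ^+ (2 ^ s) *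
   \sum_(a : {ffun 'I_k * 'I_(2 ^ (s - 1)) -> bool})
     \sum_(W : {ffun 'I_(2 ^ s) -> {ffun 'I_(n - k) -> bool}})
        \prod_(c < 2 ^ s) g a c (W c))%R.
  rewrite big_distrr /=; apply: eq_bigr => a _.
  under eq_bigr do rewrite restr_biasE.
  rewrite big_split /= prodr_const card_ord; congr (_ * _)%R.
  exact: bigA_distr_bigA.
rewrite RHS /bias.
have E1 : forall X : Bits n T, ((-1) ^+ (@PC n s T (Mblk T q l) f t X) =
    \prod_(c < 2 ^ s) g (Zl [ffun x => X (pi x)]) c (Zr [ffun x => X (pi x)] c) :> rat)%R.
  move=> X; have e0 : (((-1) ^+ false : rat) = 1)%R by rewrite expr0.
  rewrite /PC (big_morph (fun b : bool => ((-1) ^+ b : rat)%R) (@signr_addb rat) e0).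
  by apply: eq_bigr => c _; rewrite v_eq.
under eq_bigr do rewrite E1.
rewrite (@sum_comp_inj _ _ _ pi_inj
   (fun Z => \prod_(c < 2 ^ s) g (Zl Z) c (Zr Z c))%R).
have E2 : (\sum_(Z : {ffun Ltype -> bool}) \prod_(c < 2 ^ s) g (Zl Z) c (Zr Z c) =
  \sum_(a : {ffun 'I_k * 'I_(2 ^ (s - 1)) -> bool})
     \sum_(W : {ffun 'I_(2 ^ s) -> {ffun 'I_(n - k) -> bool}})
        \prod_(c < 2 ^ s) g a c (W c))%R.
  rewrite pair_big /=.
  rewrite (reindex (fun p => join p.1 p.2)) /=; last first.
    apply: onW_bij; exists (fun Z => (Zl Z, Zr Z)).
      by move=> [a W]; congr (_, _); apply/ffunP => x; rewrite !ffunE //;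
         apply/ffunP => r; rewrite !ffunE.
    by move=> Z; apply/ffunP => [[p|[c r]]]; rewrite !ffunE.
  apply: eq_bigr => [[a W]] _ /=; apply: eq_bigr => c _; congr (g _ _ _).
    by apply/ffunP => p; rewrite !ffunE.
  by apply/ffunP => r; rewrite !ffunE.
rewrite E2 !mulrA; congr (_ * _)%R.
have hLN := @leq_card _ _ _ pi_inj.
have nz x : ((2 ^ x)%:R != 0 :> rat)%R by rewrite pnatr_eq0 expn_eq0.
rewrite -{1}(subnK hLN) expnD natrM invfM mulrAC mulVf ?nz // mul1r.
rewrite exprVn -natrX -expnM -invfM -natrM -expnD card_L.
by rewrite (mulnC (2 ^ s)).
Qed.

End Main.

Theorem theorem2 (n k s : nat) (f : bvec n -> bool) (T q l : nat -> nat)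
  (HT : forall j, j < n -> 0 < T j)
  (Hs : 0 < s)
  (Hl0 : l 0 = 0)
  (Hlinc : forall i, i < s -> l i < l i.+1)
  (Hls : l s = k)
  (Hkn : k <= n)
  (Hq : forall i, i < s -> 0 < q i)
  (G1 : forall j, k <= j < n -> forall c1 c2, c1 < 2 ^ s -> c2 < 2 ^ s ->
          tau s (Mblk T q l) c1 = tau s (Mblk T q l) c2 %[mod T j] -> c1 = c2)
  (G2 : forall i, i < s -> forall j, l i <= j < l i.+1 ->
          forall c1 c2, c1 < 2 ^ s -> c2 < 2 ^ s -> ~~ cbit c1 i -> ~~ cbit c2 i ->
          tau s (Mblk T q l) c1 = tau s (Mblk T q l) c2 %[mod T j] -> c1 = c2)
  (t : nat) :
  bias (@PC n s T (Mblk T q l) f t) =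
  (((2 ^ (k * 2 ^ (s - 1)))%:R)^-1 *
  \sum_(alpha : {ffun 'I_k * 'I_(2 ^ (s - 1)) -> bool})
     \prod_(c < 2 ^ s) restr_bias k f (@chi n k s l alpha c))%R.
Proof. exact: (@main_sec n k s f T q l HT Hl0 Hlinc Hls Hkn G1 G2 t). Qed.
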